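(* Let $P$ be a simple polytope of dimension $n\leq 3$ and let $\lambda$ be a real characteristic matrix on $P$. Then there exists a characteristic matrix $\lambda'$ on $P$ whose reduction modulo $2$ equals $\lambda$.
   Context: Let $P$ be a simple $n$-polytope with facets $F_1,\ldots,F_m$. A characteristic matrix on $P$ is an integer $n\times m$ matrix $(\boldsymbol\lambda_1,\ldots,\boldsymbol\lambda_m)$ such that whenever $F_{i_1},\ldots,F_{i_n}$ meet at a vertex, $\det(\boldsymbol\lambda_{i_1},\ldots,\boldsymbol\lambda_{i_n})=\pm 1$. A real characteristic matrix on $P$ is an $n\times m$ matrix over $\mathbb{Z}/2$ satisfying the same condition with determinant $1\in\mathbb{Z}/2$. *)

(* Defs.v *)
From HB Require Import structures.
From mathcomp Require Import all_boot all_order all_algebra.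
From mathcomp Require Export reals.
Set Implicit Arguments. Unset Strict Implicit. Unset Printing Implicit Defensive.
Import Order.TTheory GRing.Theory Num.Theory.
Local Open Scope ring_scope.

Definition inP (R : realType) (n m : nat) (A : 'M[R]_(m, n)) (b : 'cV[R]_m)
  (x : 'cV[R]_n) : Prop :=
  forall i : 'I_m, (A *m x) i 0 <= b i 0.

Definition on_facet (R : realType) (n m : nat) (A : 'M[R]_(m, n)) (b : 'cV[R]_m)
  (i : 'I_m) (x : 'cV[R]_n) : Prop :=
  inP A b x /\ (A *m x) i 0 = b i 0.

Definition is_vertex (R : realType) (n m : nat) (A : 'M[R]_(m, n)) (b : 'cV[R]_m)
  (x : 'cV[R]_n) : Prop :=
  inP A b x /\
  forall (y z : 'cV[R]_n) (t : R), inP A b y -> inP A b z -> 0 < t < 1 ->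
    x = t *: y + (1 - t) *: z -> y = z.

(* (A, b) is an irredundant description of a simple n-polytope whose facets
   are exactly F_1, ..., F_m (pairwise distinct):
   - P is bounded;
   - P is full-dimensional (has an interior point);
   - each inequality defines a facet: a_i <> 0 and some point of P is tight
     exactly at inequality i (so F_i has dimension n-1 and the F_i are distinct);
   - simple: every vertex lies on exactly n facets. *)
Definition simple_polytope (R : realType) (n m : nat) (A : 'M[R]_(m, n))
  (b : 'cV[R]_m) : Prop :=
  [/\ (exists M : R, forall x, inP A b x -> forall j : 'I_n, `|x j 0| <= M),
      (exists x : 'cV[R]_n, forall i : 'I_m, (A *m x) i 0 < b i 0),
      (forall i : 'I_m, row i A != 0 /\
         exists x : 'cV[R]_n, (A *m x) i 0 = b i 0 /\
           forall j : 'I_m, j != i -> (A *m x) j 0 < b j 0) &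
      (forall v, is_vertex A b v ->
         #|[set i : 'I_m | (A *m v) i 0 == b i 0]| = n)].

Definition facets_meet_at_vertex (R : realType) (n m : nat) (A : 'M[R]_(m, n))
  (b : 'cV[R]_m) (f : 'I_n -> 'I_m) : Prop :=
  injective f /\ exists v, is_vertex A b v /\ forall k : 'I_n, on_facet A b (f k) v.

Definition characteristic_matrix (R : realType) (n m : nat) (A : 'M[R]_(m, n))
  (b : 'cV[R]_m) (L : 'M[int]_(n, m)) : Prop :=
  forall f : 'I_n -> 'I_m, facets_meet_at_vertex A b f ->
    \det (colsub f L) = 1 \/ \det (colsub f L) = -1.

Definition real_characteristic_matrix (R : realType) (n m : nat)
  (A : 'M[R]_(m, n)) (b : 'cV[R]_m) (L : 'M['F_2]_(n, m)) : Prop :=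
  forall f : 'I_n -> 'I_m, facets_meet_at_vertex A b f -> \det (colsub f L) = 1.

Definition mod2_mx (n m : nat) (L : 'M[int]_(n, m)) : 'M['F_2]_(n, m) :=
  map_mx (fun z : int => z%:~R) L.

(* Main.v *)
Require Import Defs.
From HB Require Import structures.
From mathcomp Require Import all_boot all_order all_algebra reals.
Set Implicit Arguments.
Import GRing.Theory.
Local Open Scope ring_scope.

Lemma F2_nat (k : nat) : (k%:R : 'F_2) = (odd k)%:R.
Proof.
elim: k => [//|k IH]; rewrite mulrS IH /=.
by case: (odd k) => /=; apply/val_inj.
Qed.

Lemma F2_int (z : int) : (z%:~R : 'F_2) = 1 -> odd `|z|%N.
Proof.
case: z => k.
  by rewrite -pmulrn F2_nat; case: (odd k) => //= /(congr1 val).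
by rewrite NegzE mulrNz -pmulrn F2_nat; case: (odd k.+1) => //= /(congr1 val).
Qed.

Lemma boolhelp (d : int) : odd `|d|%N ==> ((d == 1) || (d == -1)) ->
  odd `|d|%N -> d = 1 \/ d = -1.
Proof. by move=> /implyP H /H /orP [] /eqP; [left|right]. Qed.

Definition ent n (B : 'M[int]_n.+1) (i j : nat) := B (inord i) (inord j).
Lemma entE n (B : 'M[int]_n.+1) i j : B i j = ent B i j.
Proof. by rewrite /ent !inord_val. Qed.

Lemma det3 (B : 'M[int]_3) : (forall i j, B i j = 0 \/ B i j = 1) ->
  odd `|\det B|%N -> \det B = 1 \/ \det B = -1.
Proof.
move=> h; apply: boolhelp.
have h' : forall i j, ent B i j = 0 \/ ent B i j = 1 by move=> i j; apply: h.
rewrite (expand_det_row _ 0) !big_ord_recl big_ord0 /cofactor.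
rewrite !(expand_det_row _ 0) !big_ord_recl !big_ord0 /cofactor.
rewrite !det_mx11 !mxE !entE /bump /=.
move: (h' 0%N 0%N) (h' 0%N 1%N) (h' 0%N 2%N) (h' 1%N 0%N) (h' 1%N 1%N) (h' 1%N 2%N) (h' 2%N 0%N) (h' 2%N 1%N) (h' 2%N 2%N).
by do 9 (case=> ->); vm_compute.
Qed.

Lemma det2 (B : 'M[int]_2) : (forall i j, B i j = 0 \/ B i j = 1) ->
  odd `|\det B|%N -> \det B = 1 \/ \det B = -1.
Proof.
move=> h; apply: boolhelp.
have h' : forall i j, ent B i j = 0 \/ ent B i j = 1 by move=> i j; apply: h.
rewrite (expand_det_row _ 0) !big_ord_recl big_ord0 /cofactor.
rewrite !det_mx11 !mxE !entE /bump /=.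
move: (h' 0%N 0%N) (h' 0%N 1%N) (h' 1%N 0%N) (h' 1%N 1%N).
by do 4 (case=> ->); vm_compute.
Qed.

Lemma det1 (B : 'M[int]_1) : (forall i j, B i j = 0 \/ B i j = 1) ->
  odd `|\det B|%N -> \det B = 1 \/ \det B = -1.
Proof.
move=> h; rewrite det_mx11; case: (h 0 0) => ->; by [|left].
Qed.

Lemma detsmall n (B : 'M[int]_n) : (n <= 3)%N -> (forall i j, B i j = 0 \/ B i j = 1) ->
  odd `|\det B|%N -> \det B = 1 \/ \det B = -1.
Proof.
case: n B => [|[|[|[|n]]]] B // _.
- by move=> _ _; left; rewrite det_mx00.
- exact: det1.
- exact: det2.
- exact: det3.
Qed.

Definition liftF (x : 'F_2) : int := Posz (val x).

Lemma liftFK (x : 'F_2) : (liftF x)%:~R = x.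
Proof.
rewrite /liftF -pmulrn F2_nat.
by case: x => [[|[|k]] //= Hk]; apply/val_inj.
Qed.

Theorem proposition2p17 (R : realType) (n m : nat) (A : 'M[R]_(m, n))
  (b : 'cV[R]_m) (hn : (n <= 3)%N) (hP : simple_polytope A b)
  (L : 'M['F_2]_(n, m)) (hL : real_characteristic_matrix A b L) :
  exists L' : 'M[int]_(n, m), characteristic_matrix A b L' /\ mod2_mx L' = L.
Proof.
have hmod : mod2_mx (map_mx liftF L) = L.
  by apply/matrixP => i j; rewrite !mxE liftFK.
exists (map_mx liftF L); split => // f Hf.
apply: detsmall => //.
  move=> i j; rewrite !mxE /liftF.
  by case: (L i (f j)) => [[|[|k]] //= Hk]; [left|right].
have := hL f Hf.
have -> : colsub f L = map_mx intr (colsub f (map_mx liftF L)).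
  by apply/matrixP => i j; rewrite !mxE liftFK.
rewrite det_map_mx.
exact: F2_int.
Qed.
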